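(* Let $R$ be an integral domain with fraction field $K$. Suppose that $R$ contains an element having two inequivalent factorizations into irreducibles, and that every element of $R$ which is not a square in $R$ is also not a square in $K$. Then there exists a polynomial $f\in R[x]$ of degree $4$ that is indecomposable over $R$ but decomposable over $K$.
   Context: For a ring $A$ and $f\in A[x]$ with $\deg f\ge 2$, $f$ is called decomposable over $A$ if $f(x)=g(h(x))$ for some $g,h\in A[x]$ of degree at least $2$, and indecomposable over $A$ otherwise. Two factorizations of an element into irreducibles are inequivalent if there is no bijection between the irreducible factors of the first and those of the second such that corresponding irreducibles are unit multiples of one another. *)

(* Defs.v *)
From HB Require Import structures.
From mathcomp Require Import all_boot all_order all_algebra all_fingroup.
Set Implicit Arguments. Unset Strict Implicit. Unset Printing Implicit Defensive.
Import GRing.Theory.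
Local Open Scope ring_scope.

Definition irreducible_elt (R : idomainType) (a : R) : Prop :=
  a != 0 /\ a \isn't a GRing.unit /\
  forall b c : R, a = b * c -> b \is a GRing.unit \/ c \is a GRing.unit.

Definition unit_multiple (R : idomainType) (a b : R) : Prop :=
  exists2 u : R, u \is a GRing.unit & a = u * b.

Definition is_factorization (R : idomainType) (r : R) (s : seq R) : Prop :=
  (forall a, a \in s -> irreducible_elt a) /\ r = \prod_(a <- s) a.

Definition equiv_factorizations (R : idomainType) (s t : seq R) : Prop :=
  size s = size t /\
  exists sigma : 'S_(size s),
    forall i : 'I_(size s), unit_multiple (nth 0 s i) (nth 0 t (sigma i)).

Definition decomposable (A : idomainType) (f : {poly A}) : Prop :=
  exists g h : {poly A}, (2 < size g)%N /\ (2 < size h)%N /\ f = g \Po h.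

Definition indecomposable (A : idomainType) (f : {poly A}) : Prop :=
  (2 < size f)%N /\ ~ decomposable f.

(* Main.v *)
Require Import Defs.
From HB Require Import structures.
From mathcomp Require Import all_boot all_order all_algebra all_fingroup.
From mathcomp Require Import ring.
Import GRing.Theory.
Local Open Scope ring_scope.

Definition dvdR {R : idomainType} (p x : R) := exists k, x = p * k.

From Stdlib Require Import Classical.
From mathcomp Require Import zify.
Lemma cubic_fact {R : idomainType} {B Y0 e T : R} : B^+2 + T = Y0^+2 + e -> B*T = Y0*e ->
  B = Y0 \/ B^+2 + B*Y0 = e.
Proof. move=> h1 h2. have hT : T = Y0^+2 + e - B^+2 by rewrite -h1; ring.
rewrite hT in h2.
have : (B - Y0)*(B^+2 + B*Y0 - e) = 0.
  have -> : (B - Y0)*(B^+2 + B*Y0 - e) = Y0 * e - B * (Y0 ^+ 2 + e - B ^+ 2) by ring.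
  by rewrite h2 subrr.
move/eqP; rewrite mulf_eq0 => /orP[|]; rewrite subr_eq0 => /eqP; tauto.
Qed.

Lemma core (R : idomainType)
  (sq : forall a : R, (exists k : {fraction R}, @FracField.tofrac R a = k^+2) -> exists b, a = b^+2)
  (p Y0 e n : R) (irr : irreducible_elt p) (hY : ~ dvdR p Y0) (he : ~ dvdR p e)
  (hn : Y0 * e = p * n)
  (hc : 2%:R != 0 :> R \/ forall x, e = x * (x + Y0) -> dvdR p (Y0 * (Y0 + x)) -> False)
  (u v al be ga : R) :
  u * al^+2 = p^+2 -> 2%:R * u * al * be = 2%:R * p * Y0 ->
  u * (be^+2 + 2%:R * al * ga) + v * al = Y0^+2 + e ->
  2%:R * u * be * ga + v * be = n -> False.
Proof.
move=> E4 E3 E2 E1.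
case: irr => p0 [pnu pirr].
have al0 : al != 0.
  apply/eqP=> a0; move: E4; rewrite a0 expr0n /= mulr0 => /esym/eqP.
  by rewrite expf_eq0 /= (negPf p0).
have [d ud] : exists d, u = d^+2.
  apply: sq; exists (@FracField.tofrac R p / @FracField.tofrac R al).
  have := congr1 (@FracField.tofrac R) E4; rewrite rmorphM !rmorphXn /= => E.
  rewrite expr_div_n -E mulfK //; rewrite expf_eq0 /=.
  by rewrite tofrac_eq0.
have [d' [ud' dal]] : exists d', u = d'^+2 /\ d' * al = p.
  have : (d * al)^+2 == p^+2 by rewrite exprMn -ud E4.
  rewrite eqf_sqr => /orP[/eqP h|/eqP h]; first by exists d.
  by exists (- d); rewrite sqrrN -ud mulNr h opprK.
set t := 2%:R * u * ga + v.
have E2' : u * be^+2 + al * t = Y0^+2 + e by rewrite -E2 /t; ring.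
have E1' : be * t = n by rewrite -E1 /t; ring.
have [du|au] := pirr d' al (esym dal).
-
  have alE : al = p * d'^-1 by rewrite -dal mulrC mulKr.
  set b' := d' * be.
  have h1 : b'^+2 + al * t = Y0^+2 + e by rewrite -E2' ud' /b'; ring.
  have h2 : b' * (al * t) = Y0 * e.
    have -> : b' * (al * t) = (d' * al) * (be * t) by rewrite /b'; ring.
    by rewrite dal E1' hn.
  have nb : b' <> Y0.
    move=> bY; apply: he; exists (d'^-1 * t).
    rewrite bY in h1; have : al * t = e by apply: (addrI (Y0^+2)).
    by move=> <-; rewrite alE; ring.
  have [//|h3] := cubic_fact h1 h2.
  case: hc => [two|hc].
  + apply: nb. apply: (mulfI p0).
    have : 2%:R * (u * al * be) = 2%:R * (p * Y0) by rewrite !mulrA E3.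
    move/(mulfI two) => <-; rewrite ud' /b' -dal; ring.
  + apply: (hc b'); first by rewrite -h3; ring.
    exists (d'^-1 * t).
    have : al * t = Y0^+2 + b' * Y0.
      apply: (addrI (b'^+2)); rewrite h1 -h3; ring.
    move=> h4; rewrite mulrA -alE; rewrite h4; ring.
-
  have dE : d' = p * al^-1 by rewrite -dal mulrK.
  set B := p * be * al^-1.
  have h1 : B^+2 + al * t = Y0^+2 + e by rewrite -E2' ud' dE /B; ring.
  have h2 : B * (al * t) = Y0 * e.
    have -> : B * (al * t) = p * (be * t) * (al * al^-1) by rewrite /B; ring.
    by rewrite E1' divrr // mulr1 hn.
  have [h3|h3] := cubic_fact h1 h2.
  + by apply: hY; exists (be * al^-1); rewrite -h3 /B; ring.
  + by apply: he; exists (be * al^-1 * (B + Y0)); rewrite -h3 /B; ring.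
Qed.
Lemma dvd_unit {R : idomainType} {p a u : R} : u \is a GRing.unit -> dvdR p (a * u) -> dvdR p a.
Proof. move=> uu [k hk]; exists (k * u^-1); by rewrite mulrA -hk mulrK. Qed.

Lemma NB_of {R : idomainType} {p c Y0 : R} : irreducible_elt c -> ~ dvdR p Y0 ->
  ~ (exists2 x, x \is a GRing.unit & c = x * (x + Y0)) ->
  forall x, c = x * (x + Y0) -> dvdR p (Y0 * (Y0 + x)) -> False.
Proof.
move=> [c0 [cnu cirr]] hY hn x hx hd.
have [xu|xu] := cirr _ _ hx; first by apply: hn; exists x.
apply: hY; apply: (dvd_unit xu); move: hd; by rewrite addrC.
Qed.

Lemma good_exists {R : idomainType} (p b c : R) : irreducible_elt p -> irreducible_elt c ->
  ~ dvdR p b -> ~ dvdR p c -> dvdR p (b * c) ->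
  exists Y0 n, ~ dvdR p Y0 /\ Y0 * c = p * n /\
   (2%:R != 0 :> R \/ forall x, c = x * (x + Y0) -> dvdR p (Y0 * (Y0 + x)) -> False).
Proof.
move=> pirr' cirr' hb hc [n hn].
have [c0 [cnu cirr]] := cirr'.
have [p0 [pnu pirr]] := pirr'.
have [two|two] := eqVneq (2%:R : R) 0; last first.
  by exists b, n; split=> //; split=> //; left.
have [[k hk]|ncc] := classic (dvdR p (c * c)).
  exists c, k; split=> //; split=> //; right.
  apply: (NB_of cirr' hc) => -[x xu hx].
  have : x ^+ 2 = c * (1 - x) by rewrite mulrBr mulr1 {1}hx; ring.
  move=> h; move/negP: cnu; apply.
  have : (c * (1 - x)) \is a GRing.unit by rewrite -h unitrX.
  by rewrite unitrM => /andP[].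
have [nb1|b1] := classic (exists2 x, x \is a GRing.unit & c = x * (x + b)).
2: by exists b, n; split=> //; split=> //; right; apply: (NB_of cirr' hb).
have hb2 : ~ dvdR p (b + p * c).
  by move=> [k hk]; apply: hb; exists (k - c); rewrite mulrBr -hk; ring.
have [nb2|b2] := classic (exists2 x, x \is a GRing.unit & c = x * (x + (b + p * c))).
2: by exists (b + p * c), (n + c * c); split=> //; split;
   [rewrite mulrDl hn; ring | right; apply: (NB_of cirr' hb2)].
exfalso.
case: nb1 => x xu cx; case: nb2 => y yu cy.
set ka := y^-1 - x^-1 - p.
have cyi : c * y^-1 = y + (b + p * c) by rewrite {1}cy mulrC mulKr.
have cxi : c * x^-1 = x + b by rewrite {1}cx mulrC mulKr.
have Hy : y = x + c * ka.
  have -> : c * ka = c * y^-1 - c * x^-1 - p * c by rewrite /ka; ring.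
  rewrite cyi cxi; ring.
set nu := c * ka + b + p * c.
have Hk : ka * nu = - (x * p).
  have : c * (ka * nu + x * p + 2%:R * x * ka) = 0.
    have -> : c * (ka * nu + x * p + 2%:R * x * ka) = y * (y + (b + p * c)) - x * (x + b).
      by rewrite Hy /nu; ring.
    by rewrite -cy -cx subrr.
  move/eqP; rewrite mulf_eq0 (negPf c0) /= two !mul0r addr0 => /eqP h.
  by apply/eqP; rewrite -subr_eq0 opprK h.
have hp : p = ka * (- (nu * x^-1)).
  apply: (mulrI xu).
  have -> : x * (ka * - (nu * x^-1)) = - (ka * nu) * (x * x^-1) by ring.
  by rewrite Hk opprK divrr // mulr1 mulrC.
have [ku|nu'] := pirr _ _ hp.
- have kk : ka * ka \is a GRing.unit by rewrite unitrM ku.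
  apply: ncc; apply: (dvd_unit kk).
  exists (- (x * c) - ka * n - c * c * ka).
  apply/eqP; rewrite -subr_eq0.
  have -> : c * c * (ka * ka) - p * (- (x * c) - ka * n - c * c * ka)
     = c * (ka * nu + x * p) - ka * (b * c - p * n) by rewrite /nu; ring.
  by rewrite Hk hn addNr subrr !mulr0 subr0.
- have nuu : nu \is a GRing.unit.
    have : nu = - (- (nu * x^-1)) * x by rewrite opprK mulrVK.
    by move=> ->; rewrite unitrM unitrN nu' xu.
  have kk : nu * nu \is a GRing.unit by rewrite unitrM nuu.
  apply: hc; apply: (dvd_unit kk).
  exists (- (c * c * x) + n * nu + c * c * nu).
  apply/eqP; rewrite -subr_eq0.
  have -> : c * (nu * nu) - p * (- (c * c * x) + n * nu + c * c * nu)
     = nu * (b * c - p * n) + c * c * (ka * nu + x * p) by rewrite /nu; ring.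
  by rewrite Hk hn subrr addNr !mulr0 addr0.
Qed.
Fixpoint rel2 {R : idomainType} (s t : seq R) : Prop :=
  match s, t with
  | [::], [::] => True
  | a :: s', b :: t' => unit_multiple a b /\ rel2 s' t'
  | _, _ => False
  end.

Lemma rel2_nth {R : idomainType} (s t : seq R) : rel2 s t ->
  size s = size t /\ forall i, (i < size s)%N -> unit_multiple (nth 0 s i) (nth 0 t i).
Proof.
elim: s t => [|a s IH] [|b t] //=.
move=> [hab /IH [hs hi]]; split; first by rewrite hs.
by case=> [|i] //= /hi.
Qed.

Section Prime.
Variable R : idomainType.
Hypothesis H : forall p b c : R, irreducible_elt p -> irreducible_elt c ->
  dvdR p (b * c) -> dvdR p b \/ dvdR p c.

Lemma div_prod (p : R) (t : seq R) : irreducible_elt p -> (forall q, q \in t -> irreducible_elt q) ->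
  forall u, u \is a GRing.unit -> dvdR p (u * \prod_(q <- t) q) -> exists2 q, q \in t & dvdR p q.
Proof.
move=> pirr; elim: t => [|q t IH] ht u uu.
  rewrite big_nil mulr1 => -[k hk]; exfalso.
  case: pirr => _ [pnu _]; move/negP: pnu; apply.
  by move: uu; rewrite hk unitrM => /andP[].
rewrite big_cons.
have -> : u * (q * \prod_(j <- t) j) = (u * \prod_(j <- t) j) * q by ring.
move=> /(H _ _ _ pirr (ht q (mem_head _ _))) [h|h]; last by exists q; rewrite ?mem_head.
have [|q' q't hq'] := IH _ u uu h.
  by move=> z zt; apply: ht; rewrite in_cons zt orbT.
by exists q'; rewrite // in_cons q't orbT.
Qed.

Lemma uniq_fact (s : seq R) : (forall a, a \in s -> irreducible_elt a) ->
  forall (t : seq R) u, u \is a GRing.unit -> (forall a, a \in t -> irreducible_elt a) ->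
  \prod_(a <- s) a = u * \prod_(a <- t) a ->
  exists t', perm_eq t t' /\ rel2 s t'.
Proof.
elim: s => [|a s IH] hs t u uu ht.
  case: t ht => [|q t] ht; first by exists [::].
  rewrite big_nil big_cons => h; exfalso.
  have [_ [qnu _]] := ht q (mem_head _ _).
  move/negP: qnu; apply.
  have : (u * (q * \prod_(j <- t) j)) \is a GRing.unit by rewrite -h unitr1.
  by rewrite !unitrM => /and3P[].
rewrite big_cons => h.
have airr := hs a (mem_head _ _).
have [q qt [k hk]] : exists2 q, q \in t & dvdR a q.
  apply: (@div_prod a t airr ht u uu); exists (\prod_(j <- s) j); by rewrite -h.
have [_ [anu _]] := airr.
have [_ [_ qirr]] := ht q qt.
have ku : k \is a GRing.unit.
  by case: (qirr _ _ hk) => // au; move/negP: anu.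
have a0 : a != 0 by case: airr.
have hrem : \prod_(j <- t) j = q * \prod_(j <- rem q t) j.
  by rewrite (perm_big _ (perm_to_rem qt)) big_cons.
have h' : \prod_(j <- s) j = (u * k) * \prod_(j <- rem q t) j.
  apply: (mulfI a0); rewrite h hrem hk; ring.
have hs' : forall z, z \in s -> irreducible_elt z.
  by move=> z zs; apply: hs; rewrite in_cons zs orbT.
have uk : u * k \is a GRing.unit by rewrite unitrM uu ku.
have ht' : forall z, z \in rem q t -> irreducible_elt z.
  by move=> z /mem_rem zt; apply: ht.
have [t'' [hp hr]] := IH hs' (rem q t) (u * k) uk ht' h'.
exists (q :: t''); split.
  apply: perm_trans (perm_to_rem qt) _; by rewrite perm_cons.
split=> //; exists k^-1; first by rewrite unitrV.
by rewrite hk mulrC mulrK.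
Qed.

End Prime.

Lemma equiv_of (R : idomainType) (s t t' : seq R) : perm_eq t t' -> rel2 s t' ->
  equiv_factorizations s t.
Proof.
move=> hp /rel2_nth [hs hi].
have szt : size t = size s by rewrite (perm_size hp) hs.
split; first by [].
have sz : size t == size s by rewrite szt.
pose T : (size s).-tuple R := Tuple sz.
have : perm_eq t' T by rewrite perm_sym.
move/tuple_permP => [sg hsg].
exists sg => i.
have := hi i (ltn_ord i).
have -> : nth 0 t' i = nth 0 t (sg i).
  rewrite hsg -tnth_nth tnth_mktuple (tnth_nth 0) //.
done.
Qed.

Lemma fact_nonprime (R : idomainType) :
  (exists (r : R) (s t : seq R),
      is_factorization r s /\ is_factorization r t /\ ~ equiv_factorizations s t) ->
  exists p b c : R, irreducible_elt p /\ irreducible_elt c /\ ~ dvdR p b /\ ~ dvdR p c /\ dvdR p (b * c).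
Proof.
move=> [r [s [t [[hs rs] [[ht rt] hne]]]]].
apply: NNPP => hn; apply: hne.
have H : forall p b c : R, irreducible_elt p -> irreducible_elt c ->
  dvdR p (b * c) -> dvdR p b \/ dvdR p c.
  move=> p b c hp hc hd; apply: NNPP => hh; apply: hn; exists p, b, c.
  split=> //; split=> //; split; first by move=> h; apply: hh; left.
  by split=> // h; apply: hh; right.
have e1 : \prod_(a <- s) a = 1 * \prod_(a <- t) a by rewrite -rs -rt mul1r.
have [t' [hp hr]] := @uniq_fact R H s hs t 1 (unitr1 R) ht e1.
exact: equiv_of hp hr.
Qed.
Lemma expand3 {R : idomainType} {G : {poly R}} : size G = 3%N ->
  G = (G`_2)%:P * 'X^2 + (G`_1)%:P * 'X + (G`_0)%:P.
Proof.
move=> sG; rewrite -{1}(coefK G) poly_def sG !big_ord_recr big_ord0 /= add0r.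
rewrite -!mul_polyC expr0 expr1 mulr1; ring.
Qed.

Definition Q {R : idomainType} (a4 a3 a2 a1 a0 : R) : {poly R} :=
  a4%:P * 'X^4 + a3%:P * 'X^3 + a2%:P * 'X^2 + a1%:P * 'X + a0%:P.

Lemma coefQ {R : idomainType} (a4 a3 a2 a1 a0 : R) :
  [/\ (Q a4 a3 a2 a1 a0)`_4 = a4, (Q a4 a3 a2 a1 a0)`_3 = a3,
      (Q a4 a3 a2 a1 a0)`_2 = a2 & (Q a4 a3 a2 a1 a0)`_1 = a1].
Proof. by rewrite /Q !coefE /=; split; ring. Qed.

Lemma compQ {R : idomainType} (u v w al be ga : R) :
  (u%:P * 'X^2 + v%:P * 'X + w%:P) \Po (al%:P * 'X^2 + be%:P * 'X + ga%:P) =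
  Q (u * al^+2) (2%:R * u * al * be) (u * (be^+2 + 2%:R * al * ga) + v * al)
    (2%:R * u * be * ga + v * be) (u * ga^+2 + v * ga + w).
Proof.
rewrite !comp_polyD !comp_polyM !comp_polyC comp_polyX /Q.
ring.
Qed.

Lemma nt (a b : nat) : (2 < a)%N -> (2 < b)%N -> (a.-1 * b.-1 = 4)%N -> a = 3%N /\ b = 3%N.
Proof. move=> ha hb h. nia. Qed.

Lemma mapQ (R : idomainType) (a4 a3 a2 a1 a0 : R) :
  map_poly (@FracField.tofrac R) (Q a4 a3 a2 a1 a0) =
  Q (@FracField.tofrac R a4) (@FracField.tofrac R a3) (@FracField.tofrac R a2)
    (@FracField.tofrac R a1) (@FracField.tofrac R a0).
Proof. rewrite /Q !rmorphD !rmorphM /= !map_polyC !map_polyX; ring. Qed.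

Lemma size_lin (R : idomainType) (c : R) : (size ((c%:P * 'X)%R) <= 2)%N.
Proof. by rewrite mul_polyC (leq_trans (size_scale_leq _ _)) // size_polyX. Qed.

Lemma size_quad (R : idomainType) (a b : R) : a != 0 ->
  size (a%:P * 'X^2 + b%:P * 'X) = 3%N.
Proof.
move=> a0; have sa : size (a%:P * 'X^2) = 3%N by rewrite size_Cmul // size_polyXn.
by rewrite size_addl sa // ltnS size_lin.
Qed.

Lemma main_poly (R : idomainType)
  (sq : forall a : R, (exists k : {fraction R}, @FracField.tofrac R a = k^+2) -> exists b, a = b^+2)
  (p Y0 e n : R) (irr : irreducible_elt p) (hY : ~ dvdR p Y0) (he : ~ dvdR p e)
  (hn : Y0 * e = p * n)
  (hc : 2%:R != 0 :> R \/ forall x, e = x * (x + Y0) -> dvdR p (Y0 * (Y0 + x)) -> False) :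
  exists f : {poly R},
    size f = 5%N /\ indecomposable f /\ decomposable (map_poly (@FracField.tofrac R) f).
Proof.
have p0 : p != 0 by case: irr.
have Y00 : Y0 != 0 by apply/eqP=> y0; apply: hY; exists 0; rewrite y0 mulr0.
set f := Q (p^+2) (2%:R * p * Y0) (Y0^+2 + e) n 0.
have sf : size f = 5%N.
  set h0 := p%:P * 'X^2 + Y0%:P * 'X.
  have -> : f = h0 ^+ 2 + (e%:P * 'X^2 + n%:P * 'X).
    rewrite /f /Q /h0; ring.
  have sh0 : size h0 = 3%N by apply: size_quad.
  have sh2 : size (h0 ^+ 2) = 5%N.
    have := size_exp h0 2; rewrite sh0 /=.
    by case: (size (h0 ^+ 2)) => [|k] //= ->.
  rewrite size_addl sh2 //.
  apply: (leq_trans (size_add _ _)); rewrite geq_max.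
  rewrite (leq_trans (size_lin _ _)) ?andbT //.
  by rewrite mul_polyC (leq_trans (size_scale_leq _ _)) // size_polyXn.
exists f; split=> //; split.
  split; first by rewrite sf.
  move=> [G [H [sG [sH fe]]]].
  have := size_comp_poly G H; rewrite -fe sf /= => hs.
  have [sG3 sH3] := nt _ _ sG sH (esym hs).
  rewrite (expand3 sG3) (expand3 sH3) compQ in fe.
  have [a4 a3 a2 a1] := coefQ (p^+2) (2%:R * p * Y0) (Y0^+2 + e) n 0.
  have [b4 b3 b2 b1] := coefQ (G`_2 * H`_2^+2) (2%:R * G`_2 * H`_2 * H`_1)
    (G`_2 * (H`_1^+2 + 2%:R * H`_2 * H`_0) + G`_1 * H`_2)
    (2%:R * G`_2 * H`_1 * H`_0 + G`_1 * H`_1)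
    (G`_2 * H`_0^+2 + G`_1 * H`_0 + G`_0).
  rewrite /f in fe.
  apply: (@core R sq p Y0 e n irr hY he hn hc (G`_2) (G`_1) (H`_2) (H`_1) (H`_0)).
  - by rewrite -b4 -fe a4.
  - by rewrite -b3 -fe a3.
  - by rewrite -b2 -fe a2.
  - by rewrite -b1 -fe a1.
set tf := @FracField.tofrac R.
have tp0 : tf p != 0 by rewrite /tf tofrac_eq0.
exists (1%:P * 'X^2 + (tf e / tf p)%:P * 'X + 0%:P), ((tf p)%:P * 'X^2 + (tf Y0)%:P * 'X + 0%:P).
split.
  rewrite addr0 mul1r size_addl size_polyXn //.
  by rewrite mul_polyC ltnS (leq_trans (size_scale_leq _ _)) // size_polyX.
split; first by rewrite addr0 size_quad.
rewrite compQ /f mapQ.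
have ht : tf Y0 * tf e = tf p * tf n by rewrite /tf -!rmorphM /= hn.
have e4 : tf (p ^+ 2) = 1 * tf p ^+ 2 by rewrite /tf mul1r rmorphXn.
have e3 : tf (2%:R * p * Y0) = 2%:R * 1 * tf p * tf Y0 by rewrite /tf mulr1 !rmorphM /= rmorph_nat.
have e2 : tf (Y0 ^+ 2 + e) = 1 * (tf Y0 ^+ 2 + 2%:R * tf p * 0) + tf e / tf p * tf p.
  by rewrite /tf mulr0 addr0 mul1r rmorphD rmorphXn /= divfK.
have e1 : tf n = 2%:R * 1 * tf Y0 * 0 + tf e / tf p * tf Y0.
  by rewrite mulr0 add0r mulrAC [tf e * _]mulrC ht mulrC mulKf.
have e0 : tf 0 = 1 * 0 ^+ 2 + tf e / tf p * 0 + 0.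
  by rewrite /tf !mulr0 expr0n /= mulr0 !addr0 rmorph0.
rewrite -/tf e4 e3 e2 e1 e0.
done.
Qed.

Theorem theorem3p2 (R : idomainType) :
  (exists (r : R) (s t : seq R),
      is_factorization r s /\ is_factorization r t /\ ~ equiv_factorizations s t) ->
  (forall a : R, ~ (exists b : R, a = b ^+ 2) ->
      ~ (exists k : {fraction R}, @FracField.tofrac R a = k ^+ 2)) ->
  exists f : {poly R},
    size f = 5%N /\ indecomposable f /\ decomposable (map_poly (@FracField.tofrac R) f).
Proof.
move=> hf hsq.
have sq : forall a : R, (exists k : {fraction R}, @FracField.tofrac R a = k^+2) -> exists b, a = b^+2.
  by move=> a hk; apply: NNPP => hb; exact: (hsq a hb hk).
have [p [b [c [pirr [cirr [hb [hc hbc]]]]]]] := @fact_nonprime R hf.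
have [Y0 [n [hY [hn hch]]]] := @good_exists R p b c pirr cirr hb hc hbc.
exact: (@main_poly R sq p Y0 c n pirr hY hc hn hch).
Qed.
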